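(* Let $m\ge2$ and $a_1\ge a_2\ge\cdots\ge a_m\ge1$ be integers, and set $a=\max(3,a_1)$. For $1\le i\le m$ let \[E_i=\big\{[(m-i)a]\cup\{(m-i+1)a+1,\dots,ma\}\cup\{j\} : (m-i)a+1\le j\le (m-i)a+a_i\big\},\] and let $H$ be the hypergraph on $[ma]$ with edge set $E=E_1\cup\cdots\cup E_m$. Then for $F,F'\in E$, the edge spheres $Q_F$ and $Q_{F'}$ lie in the same connected component of $\Delta_H$ if and only if $F,F'\in E_i$ for some $i$. Consequently $\Delta_H$ has exactly $m$ connected components, and for each $i$ one component is the union of the $a_i$ edge spheres $Q_F$, $F\in E_i$.
   Context: Here $[0]=\emptyset$. The coloring complex $\Delta_H$ of a hypergraph $H=([N],E)$ is the abstract simplicial complex whose vertices are the nonempty proper subsets of $[N]$ and whose faces are the chains $\emptyset\neq A_1\subsetneq\cdots\subsetneq A_l\neq[N]$ ($l\ge0$) such that, with $A_0=\emptyset$, $A_{l+1}=[N]$, some difference $A_i\setminus A_{i-1}$ contains an edge of $H$. For $F\in E$, the edge sphere $Q_F$ is the subcomplex of those faces for which some difference $A_i\setminus A_{i-1}$ contains $F$. *)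

(* Defs.v *)
From HB Require Import structures.
From mathcomp Require Import all_boot.
Set Implicit Arguments. Unset Strict Implicit. Unset Printing Implicit Defensive.

(* Ground set [N] = {1,...,N} is represented by 'I_N, element x standing for x+1. *)
Section ColoringComplex.
Variable N : nat.
Variable E : {set {set 'I_N}}.

Definition is_chain (S : {set {set 'I_N}}) : bool :=
  [forall A in S, (A != set0) && (A != setT)] &&
  [forall A in S, forall B in S, (A \subset B) || (B \subset A)].

(* predecessor of A in the chain  emptyset = A_0 < A_1 < ... < A_l < A_{l+1} = [N] *)
Definition chain_pred (S : {set {set 'I_N}}) (A : {set 'I_N}) : {set 'I_N} :=
  \bigcup_(B in S | B \proper A) B.

Definition chain_diffs (S : {set {set 'I_N}}) : {set {set 'I_N}} :=
  [set A :\: chain_pred S A | A in S :|: [set setT]].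

Definition face (S : {set {set 'I_N}}) : bool :=
  is_chain S && [exists D in chain_diffs S, exists F in E, F \subset D].

Definition Qface (F : {set 'I_N}) (S : {set {set 'I_N}}) : bool :=
  is_chain S && [exists D in chain_diffs S, F \subset D].

Definition is_vertex (v : {set 'I_N}) : bool := face [set v].
Definition adj : rel {set 'I_N} := fun u v => face [set u; v].

Definition comp (v : {set 'I_N}) : {set {set 'I_N}} := [set w | connect adj v w].

(* the set of connected components of Delta_H (each given by its vertex set) *)
Definition components : {set {set {set 'I_N}}} :=
  [set comp v | v in [set v | is_vertex v]].

Definition same_component (F F' : {set 'I_N}) : Prop :=
  forall u v, Qface F [set u] -> Qface F' [set v] -> connect adj u v.

End ColoringComplex.

Definition abig (a : nat -> nat) : nat := maxn 3 (a 1).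

(* E_i, translated to 0-based indices:
   [(m-i)a] = {x | x < (m-i)a},  {(m-i+1)a+1..ma} = {x | (m-i+1)a <= x},
   j ranges over (m-i)a <= x < (m-i)a + a_i. *)
Definition Ei (m : nat) (a : nat -> nat) (i : nat) : {set {set 'I_(m * abig a)}} :=
  [set [set x : 'I_(m * abig a) | (x < (m - i) * abig a)
                                  || ((m - i).+1 * abig a <= x) || (x == j)]
  | j in [set j : 'I_(m * abig a) | ((m - i) * abig a <= j)
                                    && (j < (m - i) * abig a + a i)]].

Definition Hedges (m : nat) (a : nat -> nat) : {set {set 'I_(m * abig a)}} :=
  \bigcup_(1 <= i < m.+1) Ei m a i.

(* Main.v *)
Require Import Defs.
From HB Require Import structures.
From mathcomp Require Import all_boot zify.
Set Implicit Arguments. Unset Strict Implicit. Unset Printing Implicit Defensive.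

Section Gen.
Variable N : nat.
Variable E : {set {set 'I_N}}.
Implicit Types (S : {set {set 'I_N}}) (A B F u v : {set 'I_N}).

Lemma predP S A x : reflect (exists2 B, B \in S & B \proper A /\ x \in B) (x \in chain_pred S A).
Proof.
apply: (iffP bigcupP) => [[B /andP[BS BA] xB]|[B BS [BA xB]]]; first by exists B.
by exists B => //; rewrite BS BA.
Qed.

Lemma diff_witness S A F : A \in S :|: [set setT] -> F \subset A ->
  (forall B x, B \in S -> B \proper A -> x \in F -> x \notin B) ->
  [exists D in chain_diffs S, F \subset D].
Proof.
move=> AS FA H; apply/existsP; exists (A :\: chain_pred S A).
apply/andP; split; first by apply: imset_f.
apply/subsetP => x xF; rewrite inE (subsetP FA x xF) andbT.
by apply/predP => -[B BS [BA xB]]; move: (H B x BS BA xF); rewrite xB.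
Qed.

Lemma Qface1 F v : Qface F [set v] =
  [&& v != set0, v != setT & (F \subset v) || (F \subset ~: v)].
Proof.
apply/idP/idP.
- case/andP => /andP[/forallP H1 _] /existsP[D /andP[/imsetP[A0 AS DE] FD]]; subst D.
  move: (H1 v); rewrite set11 /= => /andP[v0 vT]; rewrite v0 vT /=.
  move: AS FD; rewrite !inE => /orP[/eqP->|/eqP->] FD.
  + apply/orP; left; apply: subset_trans FD _; exact: subsetDl.
  + apply/orP; right; apply/subsetP => x xF; rewrite inE.
    have := subsetP FD x xF; rewrite inE => /andP[xP _].
    apply/negP => xv; move/negP: xP; apply; apply/predP; exists v; rewrite ?inE //.
    split=> //; rewrite properT; exact: vT.
- case/and3P => v0 vT Hv; apply/andP; split.
  + apply/andP; split; apply/forallP => A; apply/implyP; rewrite inE => /eqP->.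
      by rewrite v0 vT.
    by apply/forallP => B; apply/implyP; rewrite inE => /eqP->; rewrite subxx.
  + case/orP: Hv => Hv.
    * apply: (diff_witness (A := v)); rewrite ?inE ?eqxx //.
      by move=> B x; rewrite inE => /eqP->; rewrite properxx.
    * apply: (diff_witness (A := setT)); rewrite ?inE ?eqxx ?orbT ?subsetT //.
      by move=> B x; rewrite inE => /eqP-> _ xF; have := subsetP Hv x xF; rewrite inE.
Qed.

Lemma chainP S : is_chain S ->
  (forall A, A \in S -> A != set0 /\ A != setT) /\
  (forall A B, A \in S -> B \in S -> (A \subset B) || (B \subset A)).
Proof.
case/andP => /forallP H1 /forallP H2; split.
  by move=> A AS; move: (H1 A); rewrite AS => /andP[-> ->].
by move=> A B AS BS; move: (H2 A); rewrite AS /= => /forallP /(_ B); rewrite BS.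
Qed.

Lemma Qface_sub F S v : Qface F S -> v \in S -> Qface F [set v].
Proof.
move=> HQ vS; case/andP: HQ => Hc /existsP[D /andP[/imsetP[A AS DE] FD]]; subst D.
have [H1 H2] := chainP Hc.
have [v0 vT] := H1 v vS.
rewrite Qface1 v0 vT /=.
have FA : F \subset A by apply: subset_trans FD (subsetDl _ _).
have [Av|] := boolP (A \subset v); first by rewrite (subset_trans FA Av).
move=> nAv; apply/orP; right.
have vA : v \proper A.
  move: AS; rewrite inE => /orP[AS|]; last first.
    by rewrite inE => /eqP ->; rewrite properT.
  by rewrite properE nAv andbT; move: (H2 A v AS vS); rewrite (negbTE nAv).
apply/subsetP => x xF; rewrite inE; apply/negP => xv.
have := subsetP FD x xF; rewrite inE => /andP[/negP xP _]; apply: xP.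
by apply/predP; exists v.
Qed.

Lemma faceQ S : face E S -> exists2 F, F \in E & Qface F S.
Proof.
by case/andP => Hc /existsP[D /andP[DS /existsP[F /andP[FE FD]]]]; exists F => //;
  rewrite /Qface Hc; apply/existsP; exists D; rewrite DS.
Qed.

Lemma Qface_face F S : F \in E -> Qface F S -> face E S.
Proof.
move=> FE /andP[Hc /existsP[D /andP[DS FD]]]; rewrite /face Hc.
by apply/existsP; exists D; rewrite DS; apply/existsP; exists F; rewrite FE.
Qed.

Lemma adj_sym : symmetric (adj E).
Proof. by move=> u v; rewrite /adj setUC. Qed.

Lemma adjQ u v : adj E u v -> exists2 F, F \in E & Qface F [set u] /\ Qface F [set v].
Proof.
move/faceQ => [F FE HQ]; exists F => //; split; apply: Qface_sub HQ _;
  by rewrite !inE eqxx ?orbT.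
Qed.

Lemma adj2 u v A F : u \proper v -> u != set0 -> v != setT -> F \in E ->
  A \in [set u; v; setT] -> F \subset A ->
  (forall B x, B \in [set u; v] -> B \proper A -> x \in F -> x \notin B) ->
  adj E u v.
Proof.
move=> uv u0 vT FE AS FA H.
have uT : u != setT.
  by apply: contraTneq uv => ->; rewrite properE subsetT andbF.
have v0 : v != set0.
  by apply: contraTneq uv => ->; rewrite properE sub0set andbF.
rewrite /adj /face; apply/andP; split.
  apply/andP; split; apply/forallP => B; apply/implyP; rewrite !inE => /orP[]/eqP->;
    rewrite ?u0 ?uT ?v0 ?vT //; apply/forallP => C; apply/implyP;
    rewrite !inE => /orP[]/eqP->; rewrite ?subxx ?(proper_sub uv) ?orbT //.
have AS' : A \in [set u; v] :|: [set setT] by move: AS; rewrite !inE.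
have /existsP[D /andP[DS FD]] := diff_witness AS' FA H.
apply/existsP; exists D; rewrite DS /=.
by apply/existsP; exists F; rewrite FE.
Qed.

Lemma conn_Q F v : F \in E -> F != set0 -> 1 < #|~: F| -> Qface F [set v] ->
  connect (adj E) F v.
Proof.
move=> FE F0 cF.
have FT : F != setT.
  by apply: contraTneq cF => ->; rewrite setCT cards0.
have CT : ~: F != setT.
  by apply: contraNneq F0 => h; rewrite -(setCK F) h setCT.
have Ha : forall w : {set 'I_N}, F \subset w -> w != setT -> connect (adj E) F w.
  move=> w Fw wT; have [->|nFw] := eqVneq F w; first exact: connect0.
  apply: connect1; apply: (adj2 (A := F) (F := F)) => //.
  - by rewrite properEneq nFw Fw.
  - by rewrite !inE eqxx.
  - move=> B x; rewrite !inE => /orP[]/eqP->; first by rewrite properxx.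
    by rewrite properE Fw andbF.
have Hb : forall d : {set 'I_N}, d \subset ~: F -> d != ~: F -> d != set0 -> connect (adj E) F d.
  move=> d dF dnF d0.
  have dFT : d :|: F != setT.
    apply: contra dnF => /eqP dFe; rewrite eqEsubset dF /=.
    apply/subsetP => x; rewrite inE => xF.
    have : x \in d :|: F by rewrite dFe inE.
    by rewrite inE (negbTE xF) orbF.
  apply: (connect_trans (Ha _ (subsetUr _ _) dFT)); apply: connect1.
  rewrite adj_sym; apply: (adj2 (A := d :|: F) (F := F)) => //.
  - rewrite properEneq subsetUl andbT; apply: contra F0 => /eqP de.
    apply/eqP/setP => x; rewrite inE; apply/negP => xF.
    have : x \in d by rewrite de inE xF orbT.
    by move/(subsetP dF); rewrite inE xF.
  - by rewrite !inE eqxx orbT.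
  - exact: subsetUr.
  - move=> B x; rewrite !inE => /orP[]/eqP->; last by rewrite properxx.
    move=> _ xF; apply/negP => xd; by have := subsetP dF x xd; rewrite inE xF.
rewrite Qface1 => /and3P[v0 vT /orP[Fv|Fv]]; first exact: Ha.
have vF : v \subset ~: F.
  apply/subsetP => x xv; rewrite inE; apply/negP => xF.
  by have := subsetP Fv x xF; rewrite inE xv.
have [vnF|vnF] := boolP (v != ~: F); first exact: Hb.
move: vnF; rewrite negbK => /eqP ->.
have [k kF] : exists k, k \in ~: F.
  by apply/set0Pn; rewrite -card_gt0; apply: ltnW.
have kF' : [set k] != ~: F.
  by apply: contraTneq cF => <-; rewrite cards1.
have kFs : [set k] \subset ~: F by rewrite sub1set.
have k0 : [set k] != set0 by apply/set0Pn; exists k; rewrite inE.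
apply: (connect_trans (Hb _ kFs kF' k0)); apply: connect1.
apply: (adj2 (A := setT) (F := F)) => //.
- by rewrite properEneq kF' kFs.
- by rewrite !inE eqxx !orbT.
- move=> B x; rewrite !inE => /orP[]/eqP-> _ xF; rewrite inE.
    by apply: contraTneq kF => <-; rewrite inE xF.
  by rewrite xF.
Qed.

End Gen.

Lemma pick3 (b j j' : nat) : exists t, t < 3 /\ b + t != j /\ b + t != j'.
Proof.
have [h0|h0] := boolP ((b != j) && (b != j')).
  by exists 0; rewrite addn0; move/andP: h0.
have [h1|h1] := boolP ((b + 1 != j) && (b + 1 != j')).
  by exists 1; move/andP: h1.
by exists 2; split => //; lia.
Qed.

Section Spec.
Variable m : nat.
Variable a : nat -> nat.
Hypothesis m2 : 2 <= m.
Hypothesis hdec : forall i, 1 <= i < m -> a i.+1 <= a i.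
Hypothesis hpos : forall i, 1 <= i <= m -> 1 <= a i.

Local Notation A := (abig a).
Local Notation N := (m * abig a).
Local Notation E := (Hedges m a).

Lemma A3 : 3 <= A.
Proof. exact: leq_maxl. Qed.

Lemma ai_le i : 1 <= i <= m -> a i <= A.
Proof.
case: i => // k; elim: k => [|k IH] hk; first exact: leq_maxr.
apply: leq_trans (hdec _) (IH _); lia.
Qed.

Lemma blk i : 1 <= i <= m -> (m - i) * A + A <= N.
Proof.
move=> hi; rewrite addnC -mulSn; apply: leq_mul => //; lia.
Qed.

Lemma blk_disj i i' : 1 <= i <= m -> 1 <= i' <= m -> i != i' ->
  ((m - i) * A + A <= (m - i') * A) \/ ((m - i') * A + A <= (m - i) * A).
Proof.
move=> hi hi' ne.
have [lt|lt] : (m - i < m - i') \/ (m - i' < m - i) by lia.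
  by left; rewrite addnC -mulSn; apply: leq_mul.
by right; rewrite addnC -mulSn; apply: leq_mul.
Qed.

Lemma memF F i : 1 <= i <= m -> F \in Ei m a i ->
  exists j : 'I_N, [/\ (m - i) * A <= j < (m - i) * A + A &
     forall x : 'I_N, (x \in F) =
       [|| x < (m - i) * A, (m - i) * A + A <= x | val x == val j]].
Proof.
move=> hi /imsetP[j]; rewrite inE => /andP[j1 j2] ->.
exists j; split.
  by rewrite j1 /=; apply: leq_trans j2 _; rewrite leq_add2l ai_le.
by move=> x; rewrite inE mulSn [A + _]addnC -orbA val_eqE.
Qed.

Lemma mkI (k : nat) : k < N -> 'I_N.
Proof. exact: Ordinal. Qed.

Lemma memH F : reflect (exists2 i, 1 <= i <= m & F \in Ei m a i) (F \in E).
Proof.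
have -> : (F \in E) = has (fun i => F \in Ei m a i) (index_iota 1 m.+1).
  rewrite /Hedges; elim: (index_iota 1 m.+1) => [|k r IH].
    by rewrite big_nil inE.
  by rewrite big_cons inE IH.
apply: (iffP hasP) => [[i]|[i hi FE]]; first by rewrite mem_index_iota ltnS; exists i.
by exists i; rewrite ?mem_index_iota ?ltnS.
Qed.

Lemma F_props F i : 1 <= i <= m -> F \in Ei m a i ->
  F \in E /\ F != set0 /\ 1 < #|~: F|.
Proof.
move=> hi FE; have FH : F \in E by apply/memH; exists i.
split=> //.
have [j [/andP[j1 j2] Hx]] := memF hi FE.
have hb := blk hi; have h3 := A3.
split.
  by apply/set0Pn; exists j; rewrite Hx eqxx !orbT.
have [t [t3 [tj _]]] := pick3 ((m - i) * A) j j.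
have [t' [t'3 [t'j t't]]] := pick3 ((m - i) * A) j ((m - i) * A + t).
have lx : (m - i) * A + t < N by lia.
have ly : (m - i) * A + t' < N by lia.
pose x := Ordinal lx; pose y := Ordinal ly.
have : [set x; y] \subset ~: F.
  apply/subsetP => z; rewrite !inE => /orP[]/eqP->; rewrite Hx /=; lia.
move/subset_leq_card; apply: leq_trans; rewrite cards2 ltnS lt0n -val_eqE /=; lia.
Qed.

Lemma UI F F' i i' : 1 <= i <= m -> 1 <= i' <= m -> i != i' ->
  F \in Ei m a i -> F' \in Ei m a i' ->
  (forall x, (x \in F) || (x \in F')) /\ exists y, (y \in F) && (y \in F').
Proof.
move=> hi hi' ne FE FE'.
have [j [/andP[j1 j2] Hx]] := memF hi FE.
have [j' [/andP[j1' j2'] Hx']] := memF hi' FE'.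
have hd := blk_disj hi hi' ne.
split; first by move=> x; rewrite Hx Hx'; lia.
by exists j; rewrite Hx Hx'; lia.
Qed.

Lemma sep F F' i i' v : 1 <= i <= m -> 1 <= i' <= m ->
  F \in Ei m a i -> F' \in Ei m a i' ->
  Qface F [set v] -> Qface F' [set v] -> i = i'.
Proof.
move=> hi hi' FE FE' Q1 Q2; case: (eqVneq i i') => // ne; exfalso.
have [U [y /andP[yF yF']]] := UI hi hi' ne FE FE'.
move: Q1 Q2; rewrite !Qface1 => /and3P[v0 vT H] /and3P[_ _ H'].
case/orP: H => H; case/orP: H' => H'.
- move/negP: vT; apply; apply/eqP/setP => x; rewrite inE.
  by case/orP: (U x) => [/(subsetP H)|/(subsetP H')].
- by move: (subsetP H y yF) (subsetP H' y yF'); rewrite !inE; case: (y \in v).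
- by move: (subsetP H y yF) (subsetP H' y yF'); rewrite !inE; case: (y \in v).
- case/set0Pn: v0 => x xv.
  by case/orP: (U x) => [/(subsetP H)|/(subsetP H')]; rewrite inE xv.
Qed.

Lemma conn_same F F' i : 1 <= i <= m -> F \in Ei m a i -> F' \in Ei m a i ->
  connect (adj E) F F'.
Proof.
move=> hi FE FE'.
have [j [/andP[j1 j2] Hx]] := memF hi FE.
have [j' [/andP[j1' j2'] Hx']] := memF hi FE'.
have hb := blk hi; have h3 := A3.
have [t [t3 [tj tj']]] := pick3 ((m - i) * A) j j'.
have lx : (m - i) * A + t < N by lia.
pose x := Ordinal lx.
have [H1 [H2 H3]] := F_props hi FE.
have [H1' [H2' H3']] := F_props hi FE'.
have xT : [set x] != setT.
  apply/negP => /eqP xe; have : j \in [set x] by rewrite xe inE.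
  rewrite inE -val_eqE /=; lia.
have x0 : [set x] != set0 by apply/set0Pn; exists x; rewrite inE.
have QF : Qface F [set [set x]].
  rewrite Qface1 x0 xT /=; apply/orP; right; apply/subsetP => z zF; rewrite !inE.
  apply/eqP => ze; move: zF; rewrite ze Hx /=; lia.
have QF' : Qface F' [set [set x]].
  rewrite Qface1 x0 xT /=; apply/orP; right; apply/subsetP => z zF; rewrite !inE.
  apply/eqP => ze; move: zF; rewrite ze Hx' /=; lia.
apply: connect_trans (conn_Q H1 H2 H3 QF) _.
by rewrite (sym_connect_sym (@adj_sym _ E)); apply: conn_Q.
Qed.


Definition cls i (v : {set 'I_N}) := [exists F in Ei m a i, Qface F [set v]].

Lemma cls_unique i i' v : 1 <= i <= m -> 1 <= i' <= m -> cls i v -> cls i' v -> i = i'.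
Proof.
move=> hi hi' /existsP[F /andP[FE QF]] /existsP[F' /andP[FE' QF']].
exact: (sep hi hi' FE FE' QF QF').
Qed.

Lemma cls_step i u v : 1 <= i <= m -> adj E u v -> cls i u -> cls i v.
Proof.
move=> hi /adjQ[F FE [Qu Qv]] cu.
have /memH[i' hi' FE'] := FE.
have ci' : cls i' u by apply/existsP; exists F; rewrite FE'.
have e := cls_unique hi' hi ci' cu; subst i'.
by apply/existsP; exists F; rewrite FE'.
Qed.

Lemma cls_conn i u v : 1 <= i <= m -> connect (adj E) u v -> cls i u -> cls i v.
Proof.
move=> hi /connectP[p pth ->]; elim: p u pth => [|w p IH] u //= /andP[uw pth] cu.
exact: (IH w pth (cls_step hi uw cu)).
Qed.

Lemma Qself F i : 1 <= i <= m -> F \in Ei m a i -> Qface F [set F].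
Proof.
move=> hi FE; have [_ [F0 cF]] := F_props hi FE.
rewrite Qface1 F0 subxx /= andbT.
by apply: contraTneq cF => ->; rewrite setCT cards0.
Qed.

Lemma connQ F i v : 1 <= i <= m -> F \in Ei m a i -> Qface F [set v] ->
  connect (adj E) F v.
Proof. by move=> hi FE; have [H1 [H2 H3]] := F_props hi FE; apply: conn_Q. Qed.

Definition rep i := odflt set0 [pick F in Ei m a i].

Lemma rep_in i : 1 <= i <= m -> rep i \in Ei m a i.
Proof.
move=> hi; rewrite /rep; case: pickP => [F ->|H] //=.
have hb := blk hi; have h3 := A3; have := hpos hi => hp.
have lx : (m - i) * A < N by lia.
have : (Ordinal lx) \in [set j : 'I_N | ((m - i) * A <= j) && (j < (m - i) * A + a i)].
  by rewrite inE /=; lia.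
move/(imset_f (fun j : 'I_N => [set x : 'I_N | (x < (m - i) * A)
                                  || ((m - i).+1 * A <= x) || (x == j)])).
by rewrite -/(Ei m a i) H.
Qed.

Lemma csym : connect_sym (adj E).
Proof. exact: sym_connect_sym (@adj_sym _ E). Qed.

Lemma comp_eq u w : connect (adj E) u w -> Defs.comp E u = Defs.comp E w.
Proof.
move=> uw; apply/setP => z; rewrite !inE; apply/idP/idP => H.
  by apply: connect_trans H; rewrite csym.
exact: connect_trans uw H.
Qed.

Lemma main_sec :
  (forall F F', F \in Hedges m a -> F' \in Hedges m a ->
     (same_component (Hedges m a) F F' <->
      exists i, [/\ 1 <= i <= m, F \in Ei m a i & F' \in Ei m a i])) /\
  #|components (Hedges m a)| = m /\
  (forall i, 1 <= i <= m ->
     exists2 C, C \in components (Hedges m a) &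
       forall S : {set {set 'I_(m * abig a)}}, S != set0 ->
         (face (Hedges m a) S && (S \subset C)) =
         [exists F in Ei m a i, Qface F S]).
Proof.
split.
  move=> F F' /memH[i hi FE] /memH[i' hi' FE']; split.
    move=> sc; have c := sc F F' (Qself hi FE) (Qself hi' FE').
    have ci : cls i F by apply/existsP; exists F; rewrite FE (Qself hi FE).
    have ci' : cls i' F' by apply/existsP; exists F'; rewrite FE' (Qself hi' FE').
    have e := cls_unique hi hi' (cls_conn hi c ci) ci'; subst i'.
    by exists i.
  case=> k [hk Fk F'k] u v Qu Qv.
  have c1 : connect (adj E) u F by rewrite csym; exact: connQ hk Fk Qu.
  apply: connect_trans c1 _.
  exact: connect_trans (conn_same hk Fk F'k) (connQ hk F'k Qv).
have repv : forall i, 1 <= i <= m -> rep i \in [set v | is_vertex E v].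
  move=> i hi; rewrite inE /is_vertex.
  apply: (Qface_face (F := rep i)); first by apply/memH; exists i => //; exact: rep_in.
  exact: Qself (rep_in hi).
have repc : forall i, 1 <= i <= m -> cls i (rep i).
  by move=> i hi; apply/existsP; exists (rep i); rewrite rep_in // (Qself hi (rep_in hi)).
split.
  have -> : components E = [set Defs.comp E (rep (val k).+1) | k : 'I_m].
    apply/setP => C; apply/imsetP/imsetP.
      case=> v; rewrite inE /is_vertex => /faceQ[F /memH[i hi FE] Qv] ->.
      have hk : i.-1 < m by lia.
      exists (Ordinal hk) => //=.
      have -> : i.-1.+1 = i by lia.
      apply: comp_eq; rewrite csym.
      exact: connect_trans (conn_same hi (rep_in hi) FE) (connQ hi FE Qv).
    case=> k _ ->; exists (rep (val k).+1) => //; apply: repv.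
    by rewrite ltn_ord.
  rewrite card_imset ?card_ord // => k k' e.
  apply/val_inj/eqP; rewrite -eqSS; apply/eqP.
  have hk : 1 <= (val k).+1 <= m by rewrite ltn_ord.
  have hk' : 1 <= (val k').+1 <= m by rewrite ltn_ord.
  have : rep (val k').+1 \in Defs.comp E (rep (val k).+1) by rewrite e inE connect0.
  rewrite inE => c.
  exact: cls_unique hk hk' (cls_conn hk c (repc _ hk)) (repc _ hk').
move=> i hi; exists (Defs.comp E (rep i)); first by apply: imset_f; apply: repv.
move=> S S0; apply/idP/idP.
  case/andP => /faceQ[F /memH[i' hi' FE] QS] SC.
  case/set0Pn: S0 => v vS.
  have Qv := Qface_sub QS vS.
  have c : connect (adj E) (rep i) v by move: (subsetP SC v vS); rewrite inE.
  have ci' : cls i' v by apply/existsP; exists F; rewrite FE.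
  have e := cls_unique hi hi' (cls_conn hi c (repc _ hi)) ci'; subst i'.
  by apply/existsP; exists F; rewrite FE.
case/existsP => F /andP[FE QS].
rewrite (Qface_face (F := F)) /=; last exact: QS; last by apply/memH; exists i.
apply/subsetP => v vS; rewrite inE.
exact: connect_trans (conn_same hi (rep_in hi) FE) (connQ hi FE (Qface_sub QS vS)).
Qed.

End Spec.

Theorem mainTheorem15 (m : nat) (a : nat -> nat) :
  2 <= m ->
  (forall i, 1 <= i < m -> a i.+1 <= a i) ->
  (forall i, 1 <= i <= m -> 1 <= a i) ->
  (forall F F', F \in Hedges m a -> F' \in Hedges m a ->
     (same_component (Hedges m a) F F' <->
      exists i, [/\ 1 <= i <= m, F \in Ei m a i & F' \in Ei m a i])) /\
  #|components (Hedges m a)| = m /\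
  (forall i, 1 <= i <= m ->
     exists2 C, C \in components (Hedges m a) &
       forall S : {set {set 'I_(m * abig a)}}, S != set0 ->
         (face (Hedges m a) S && (S \subset C)) =
         [exists F in Ei m a i, Qface F S]).
Proof.
move=> h1 h2 h3; exact: (@main_sec m a h1 h2 h3).
Qed.
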